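(* Let $H$ be a real Hilbert space, $I=\{1,\dots,M\}$, let $f_i,h_i,T_i$ ($i\in I$) satisfy Assumption (A1)–(A4) and the parameters satisfy Condition (C) (both described below). Consider the sequences generated by the Distributed Accelerated Incremental Algorithm below, and assume that for each $i\in I$ the sequence $\{y^{(i)}_n\}$ is bounded. Then the sequences $\{T_i(y^{(i)}_n)\}$, $\{x_n\}$, $\{w^{(i)}_n\}$, $\{z^{(i)}_n\}$ and $\{d^{(i)}_n\}$ ($i\in I$) are bounded.
   Context: Assumption (A1): each $f_i:H\to\mathbb{R}$ is continuous and convex. (A2): each $h_i:H\to\mathbb{R}$ is convex and Fréchet differentiable, and $\nabla h_i$ is $(1/L_i)$-Lipschitz continuous for some $L_i>0$. (A3): each $T_i:H\to H$ is firmly nonexpansive, i.e. $\|T_ix-T_iy\|^2\le\langle T_ix-T_iy,x-y\rangle$ for all $x,y$. (A4): $S=\bigcap_{i=1}^M\mathrm{Fix}\,T_i\neq\emptyset$ and, with $\psi=\sum_{i=1}^M(f_i+h_i)$, $\Omega=\{\hat x\in S:\psi(\hat x)=\min_{x\in S}\psi(x)\}\neq\emptyset$. Condition (C): $\{\theta_n\},\{\lambda_n\},\{\beta_n\},\{\alpha_n\}$ are decreasing real sequences converging to $0$ with $\theta_n\in[0,1)$, $\lambda_n\in(0,2\min_{i\in I}L_i]$, $\beta_n\in(0,1]$, $\alpha_n\in(0,1]$, and: (C1) $\sum_n\alpha_n=\infty$; (C2) $\lim_n\frac{1}{\alpha_{n+1}}\big|\frac{1}{\lambda_{n+1}}-\frac{1}{\lambda_n}\big|=0$;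 (C3) $\lim_n\frac{1}{\lambda_{n+1}}\big|1-\frac{\alpha_n}{\alpha_{n+1}}\big|=0$; (C4) $\lim_n\frac{\alpha_n}{\lambda_n}=0$; (C5) $\lim_n\frac{\theta_n}{\alpha_{n+1}\lambda_{n+1}}=0$; (C6) $\frac{\lambda_n}{\lambda_{n+1}}\le\sigma$ for some $\sigma\ge1$; (C7) $\lim_n\frac{\beta_n}{\alpha_{n+1}}=0$. $\mathrm{prox}_{\lambda g}(x)=\arg\min_y\{g(y)+\frac{1}{2\lambda}\|x-y\|^2\}$. Distributed Accelerated Incremental Algorithm: choose $x_1\in H$, $w^{(i)}_0,z^{(i)}_0,u^{(i)}\in H$ and set $d^{(i)}_1=-\nabla h_i(z^{(i)}_0)$ ($i\in I$). For $n=1,2,\dots$: set $w^{(1)}_n=x_n$; for $i=1,\dots,M$ compute $z^{(i)}_n=w^{(i)}_n+\theta_n(w^{(i)}_n-w^{(i)}_{n-1})$, $d^{(i)}_{n+1}=-\nabla h_i(z^{(i)}_n)+\beta_nd^{(i)}_n$, $y^{(i)}_n=\mathrm{prox}_{\lambda_nf_i}(z^{(i)}_n+\lambda_nd^{(i)}_{n+1})$, $w^{(i+1)}_n=\alpha_nu^{(i)}+(1-\alpha_n)T_i(y^{(i)}_n)$; then set $x_{n+1}=w^{(M+1)}_n$. *)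

(* Defs.v *)
From HB Require Import structures.
From mathcomp Require Import all_boot all_order all_algebra.
From mathcomp Require Import all_classical all_reals all_analysis.
Set Implicit Arguments. Unset Strict Implicit. Unset Printing Implicit Defensive.
Import Order.TTheory GRing.Theory Num.Theory.
Import numFieldNormedType.Exports.
Local Open Scope classical_set_scope.
Local Open Scope ring_scope.

(* ip is an inner product on the (complete) normed space H inducing its norm:
   symmetric, linear in the first argument, and <x,x> = ||x||^2.
   A real Hilbert space is then a completeNormedModType R with such an ip. *)
Definition is_inner_product (R : realType) (H : normedModType R)
  (ip : H -> H -> R) : Prop :=
  (forall x y, ip x y = ip y x) /\
  (forall (a : R) (x y z : H), ip (a *: x + y) z = a * ip x z + ip y z) /\
  (forall x, ip x x = `|x| ^+ 2).

Definition convex_fun (R : realType) (H : normedModType R) (g : H -> R) : Prop :=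
  forall (x y : H) (t : R), 0 <= t <= 1 ->
    g (t *: x + (1 - t) *: y) <= t * g x + (1 - t) * g y.

Definition has_gradient (R : realType) (H : normedModType R)
  (ip : H -> H -> R) (g : H -> R) (gr : H -> H) : Prop :=
  forall x, differentiable g x /\ forall v, 'd g x v = ip (gr x) v.

Definition lipschitz_const (R : realType) (H : normedModType R)
  (k : R) (F : H -> H) : Prop :=
  forall x y, `|F x - F y| <= k * `|x - y|.

Definition firmly_nonexpansive (R : realType) (H : normedModType R)
  (ip : H -> H -> R) (T : H -> H) : Prop :=
  forall x y, `|T x - T y| ^+ 2 <= ip (T x - T y) (x - y).

Definition is_prox (R : realType) (H : normedModType R)
  (lam : R) (g : H -> R) (x p : H) : Prop :=
  forall q, g p + (2 * lam)^-1 * `|x - p| ^+ 2 <= g q + (2 * lam)^-1 * `|x - q| ^+ 2.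

Definition bounded_seq (R : realType) (H : normedModType R) (s : nat -> H) : Prop :=
  exists B : R, forall n, (1 <= n)%N -> `|s n| <= B.

Definition nonincr_seq (R : realType) (s : nat -> R) : Prop :=
  forall n, (1 <= n)%N -> s n.+1 <= s n.

(* Main.v *)
Require Import Defs.
From HB Require Import structures.
From mathcomp Require Import all_boot all_order all_algebra.
From mathcomp Require Import all_classical all_reals all_analysis.
From mathcomp Require Import zify.
From mathcomp Require Import lra.
Import Order.TTheory GRing.Theory Num.Theory.
Import numFieldNormedType.Exports.
Local Open Scope classical_set_scope.
Local Open Scope ring_scope.

Lemma prefix_bound (R : realType) (H : normedModType R) (s : nat -> H) (N : nat) :
  exists B : R, 0 <= B /\ forall n, (n <= N)%N -> `|s n| <= B.
Proof.
elim: N => [|N [B [B0 HB]]].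
  exists `|s 0%N|; split => // n; rewrite leqn0 => /eqP ->.
  done.
exists (B + `|s N.+1|); split; first by rewrite addr_ge0.
move=> n; rewrite leq_eqVlt => /orP [/eqP ->|]; first by rewrite lerDr.
rewrite ltnS => /HB hn; by rewrite (le_trans hn) // lerDl.
Qed.

Lemma bounded_all (R : realType) (H : normedModType R) (s : nat -> H) :
  bounded_seq s -> exists B : R, 0 <= B /\ forall n, `|s n| <= B.
Proof.
case=> B HB; exists (`|s 0%N| + B); split.
  by rewrite addr_ge0 // (le_trans _ (HB 1%N _)).
case=> [|n]; first by rewrite lerDl (le_trans _ (HB 1%N _)).
by rewrite (le_trans (HB _ _)) // lerDr.
Qed.

Lemma ip_bound (R : realType) (H : normedModType R) (ip : H -> H -> R) :
  is_inner_product ip -> forall a b, 2 * ip a b <= `|a| ^+ 2 + `|b| ^+ 2.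
Proof.
move=> [Hs [Hl Hn]] a b.
have ip0 : forall c, ip 0 c = 0.
  move=> c; have := Hl 1 0 0 c; rewrite scaler0 addr0 mul1r; lra.
have ipD : forall x y c, ip (x + y) c = ip x c + ip y c.
  by move=> x y c; rewrite -{1}(scale1r x) Hl mul1r.
have ipN : forall x c, ip (- x) c = - ip x c.
  move=> x c; have := Hl (-1) x 0 c; rewrite addr0 ip0 addr0 scaleN1r => ->.
  by rewrite mulN1r.
have := Hn (a - b); rewrite ipD ipN (Hs a (a - b)) (Hs b (a - b)) !ipD !ipN (Hs b a) !Hn => E.
have : 0 <= `|a - b| ^+ 2 by rewrite exprn_ge0.
rewrite -E; lra.
Qed.

Lemma fne_nonexp (R : realType) (H : normedModType R) (ip : H -> H -> R) T :
  is_inner_product ip -> firmly_nonexpansive ip T ->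
  forall x y, `|T x - T y| <= `|x - y|.
Proof.
move=> Hip HT x y.
have h1 := HT x y; have h2 := @ip_bound _ _ _ Hip (T x - T y) (x - y).
have : `|T x - T y| ^+ 2 <= `|x - y| ^+ 2 by lra.
by rewrite ler_sqr ?nnegrE.
Qed.

Arguments prefix_bound {R H}.
Arguments bounded_all {R H s}.
Arguments ip_bound {R H ip}.
Arguments fne_nonexp {R H ip T}.

Theorem lemma2 (R : realType) (H : completeNormedModType R) (ip : H -> H -> R)
  (M : nat)
  (f h : nat -> H -> R) (gh : nat -> H -> H) (L : nat -> R) (T : nat -> H -> H)
  (theta lam beta alpha : nat -> R)
  (x : nat -> H) (w z d y : nat -> nat -> H) (u : nat -> H) :
  is_inner_product ip ->
  (* (A1) *)
  (forall i, (1 <= i <= M)%N -> continuous (f i) /\ convex_fun (f i)) ->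
  (* (A2) *)
  (forall i, (1 <= i <= M)%N ->
     convex_fun (h i) /\ has_gradient ip (h i) (gh i) /\
     0 < L i /\ lipschitz_const (L i)^-1 (gh i)) ->
  (* (A3) *)
  (forall i, (1 <= i <= M)%N -> firmly_nonexpansive ip (T i)) ->
  (* (A4) *)
  (exists p : H, forall i, (1 <= i <= M)%N -> T i p = p) ->
  (exists xh : H, (forall i, (1 <= i <= M)%N -> T i xh = xh) /\
     forall q : H, (forall i, (1 <= i <= M)%N -> T i q = q) ->
       \sum_(1 <= i < M.+1) (f i xh + h i xh) <= \sum_(1 <= i < M.+1) (f i q + h i q)) ->
  (* Condition (C) *)
  nonincr_seq theta -> nonincr_seq lam ->
  nonincr_seq beta -> nonincr_seq alpha ->
  theta @ \oo --> 0 -> lam @ \oo --> 0 -> beta @ \oo --> 0 -> alpha @ \oo --> 0 ->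
  (forall n, (1 <= n)%N ->
     [/\ 0 <= theta n < 1,
         0 < lam n /\ (forall i, (1 <= i <= M)%N -> lam n <= 2 * L i),
         0 < beta n <= 1 & 0 < alpha n <= 1]) ->
  (* (C1) *) series alpha @ \oo --> +oo ->
  (* (C2) *) (fun n => (alpha n.+1)^-1 * `|(lam n.+1)^-1 - (lam n)^-1|) @ \oo --> 0 ->
  (* (C3) *) (fun n => (lam n.+1)^-1 * `|1 - alpha n / alpha n.+1|) @ \oo --> 0 ->
  (* (C4) *) (fun n => alpha n / lam n) @ \oo --> 0 ->
  (* (C5) *) (fun n => theta n / (alpha n.+1 * lam n.+1)) @ \oo --> 0 ->
  (* (C6) *) (exists sigma : R, 1 <= sigma /\
                forall n, (1 <= n)%N -> lam n / lam n.+1 <= sigma) ->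
  (* (C7) *) (fun n => beta n / alpha n.+1) @ \oo --> 0 ->
  (* the algorithm *)
  (forall i, (1 <= i <= M)%N -> d i 1%N = - gh i (z i 0%N)) ->
  (forall n, (1 <= n)%N -> w 1%N n = x n) ->
  (forall n i, (1 <= n)%N -> (1 <= i <= M)%N ->
     [/\ z i n = w i n + theta n *: (w i n - w i n.-1),
         d i n.+1 = - gh i (z i n) + beta n *: d i n,
         is_prox (lam n) (f i) (z i n + lam n *: d i n.+1) (y i n)
       & w i.+1 n = alpha n *: u i + (1 - alpha n) *: T i (y i n)]) ->
  (forall n, (1 <= n)%N -> x n.+1 = w M.+1 n) ->
  (* boundedness assumption *)
  (forall i, (1 <= i <= M)%N -> bounded_seq (y i)) ->
  (forall i, (1 <= i <= M)%N -> bounded_seq (fun n => T i (y i n))) /\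
  bounded_seq x /\
  (forall i, (1 <= i <= M)%N ->
     [/\ bounded_seq (w i), bounded_seq (z i) & bounded_seq (d i)]).
Proof.
move=> Hip HA1 HA2 HA3 Hp Hxh Htheta Hlam Hbeta Halpha ctheta clam cbeta calpha
  Hpar C1 C2 C3 C4 C5 C6 C7 Hd1 Hw1 Halg Hx Hy.
have hTy : forall i, (1 <= i <= M)%N -> bounded_seq (fun n => T i (y i n)).
  move=> i hi; have [B [B0 HB]] := bounded_all (Hy i hi).
  exists (B + B + `|T i (y i 0%N)|) => n _.
  have := ler_normD (T i (y i n) - T i (y i 0%N)) (T i (y i 0%N)); rewrite subrK.
  have := fne_nonexp Hip (HA3 i hi) (y i n) (y i 0%N).
  have := ler_normB (y i n) (y i 0%N).
  have := HB n; have := HB 0%N; lra.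
have hws : forall i, (1 <= i <= M)%N -> bounded_seq (w i.+1).
  move=> i hi; have [B [B0 HB]] := bounded_all (hTy i hi).
  exists (`|u i| + B) => n hn.
  case: (Halg n i hn hi) => _ _ _ ->.
  have [_ _ _ /andP[a0 a1]] := Hpar n hn.
  rewrite (le_trans (ler_normD _ _)) // !normrZ (ger0_norm (ltW a0)).
  rewrite ger0_norm ?subr_ge0 //.
  have := HB n; have := normr_ge0 (u i); have := normr_ge0 (T i (y i n)); nra.
have hx : bounded_seq x.
  case: (posnP M) => [M0|Mpos].
    subst M.
    have E : forall n, x n.+1 = x 1%N.
      elim=> [//|n IH]; by rewrite Hx // Hw1.
    by exists `|x 1%N|; case=> [//|n] _; rewrite E.
  have hM : (1 <= M <= M)%N by rewrite Mpos leqnn.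
  have [B [B0 HB]] := bounded_all (hws M hM).
  exists (B + `|x 1%N|); case=> [|[|n]] // _; first by rewrite lerDr.
  by rewrite Hx // (le_trans (HB _)) // lerDl.
have hw : forall i, (1 <= i <= M)%N -> bounded_seq (w i).
  case=> [//|[|j]] hi.
    case: hx => B HB; exists B => n hn; rewrite Hw1 //; exact: HB.
  apply: hws; lia.
have hz : forall i, (1 <= i <= M)%N -> bounded_seq (z i).
  move=> i hi; have [B [B0 HB]] := bounded_all (hw i hi).
  exists (3 * B) => n hn.
  case: (Halg n i hn hi) => -> _ _ _.
  have [/andP[t0 t1] _ _ _] := Hpar n hn.
  rewrite (le_trans (ler_normD _ _)) // normrZ (ger0_norm t0).
  have := ler_normB (w i n) (w i n.-1).
  have := HB n; have := HB n.-1; have := normr_ge0 (w i n - w i n.-1); nra.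
have hd : forall i, (1 <= i <= M)%N -> bounded_seq (d i).
  move=> i hi; have [B [B0 HB]] := bounded_all (hz i hi).
  have [_ [_ [L0 HL]]] := HA2 i hi.
  pose G := (L i)^-1 * B + `|gh i 0|.
  have G0 : 0 <= G by rewrite addr_ge0 // mulr_ge0 // invr_ge0 ltW.
  have hG : forall n, `|gh i (z i n)| <= G.
    move=> n; have := ler_normD (gh i (z i n) - gh i 0) (gh i 0); rewrite subrK.
    have := HL (z i n) 0; rewrite subr0.
    have : (L i)^-1 * `|z i n| <= (L i)^-1 * B.
      by rewrite ler_wpM2l // invr_ge0 ltW.
    rewrite /G; lra.
  have [N [N1 HN]] : exists N, (1 <= N)%N /\ forall n, (N <= n)%N -> `|beta n| < 1/2.
    have := @cvgr0_norm_lt _ _ _ _ _ beta cbeta (1/2) _.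
    case; first lra.
    move=> N _ HN; exists N.+1; split => // n hn; apply: HN.
    by apply: leq_trans hn; rewrite leqnSn.
  have [P [P0 HP]] := prefix_bound (d i) N.
  pose K := Num.max P (2 * G).
  have PK : P <= K by rewrite le_max lexx.
  have GK : 2 * G <= K by rewrite le_max lexx orbT.
  have hk : forall k, `|d i (N + k)%N| <= K.
    elim=> [|k IH]; first by rewrite addn0 (le_trans (HP _ _)).
    have hn : (1 <= N + k)%N by lia.
    rewrite addnS; case: (Halg (N + k)%N i hn hi) => _ -> _ _.
    rewrite (le_trans (ler_normD _ _)) // normrN normrZ.
    have := HN (N + k)%N (leq_addr _ _).
    have := hG (N + k)%N; have := normr_ge0 (beta (N + k)%N).
    have := normr_ge0 (d i (N + k)%N); nra.
  exists K => n _; case: (leqP n N) => hn; first exact: le_trans (HP _ hn) PK.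
  by rewrite -(subnKC (ltnW hn)).
split; first exact: hTy.
split; first exact: hx.
by move=> i hi; split; auto.
Qed.
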